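(* Let $N$ denote a positive integer and, for each positive integer $n$, let $\mathscr E_n=\operatorname{span}_{\mathbb C}\{z^n n^q\mathcal H_{\alpha}(n): z,q\in\mathbb C,\ \alpha\text{ a word}\}$ and $\mathscr H_N=\operatorname{span}_{\mathbb C}\{\mathcal H_{\alpha}(N):\alpha\text{ a word}\}$. Suppose $F_1(n),\ldots,F_m(n)\in\mathscr E_n$, i.e. \[ F_j(n)=\sum_{\ell=1}^{M_j}c_{j,\ell}\,z_{j,\ell}^{\,n}\,n^{q_{j,\ell}}\,\mathcal H_{\alpha_{j,\ell}}(n) \] with $c_{j,\ell},z_{j,\ell},q_{j,\ell}\in\mathbb C$ and words $\alpha_{j,\ell}$. Then for every $e_1,\ldots,e_m\in\mathbb Z_{\ge0}$, the finite sum \[ S(N)=\sum_{n=1}^{N}\prod_{j=1}^{m}F_j(n)^{e_j} \] belongs to $\mathscr H_N$, i.e. it is a finite $\mathbb C$-linear combination of the numbers $\mathcal H_\beta(N)$ for words $\beta$.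
   Context: A letter is a pair $(r,s)\in\mathbb C^2$ and a word is a finite sequence of letters. For a word $\alpha=((r_1,s_1),\ldots,(r_d,s_d))$ and a positive integer $N$, \[ \mathcal H_{\alpha}(N)=\sum_{N\ge n_1>\cdots>n_d\ge1}\prod_{i=1}^{d}\frac{s_i^{n_i}}{n_i^{r_i}},\qquad \mathcal H_\emptyset(N)=1. \] Powers of positive integers are defined by $n^r=\exp(r\log n)$ with the real logarithm. *)

(* Defs.v *)
From Stdlib Require Import Reals List.
From Coquelicot Require Import Coquelicot.
Import ListNotations.
Open Scope C_scope.

Definition Cexp (w : C) : C :=
  (exp (fst w) * cos (snd w), exp (fst w) * sin (snd w))%R.

Definition npow (n : nat) (r : C) : C := Cexp (r * RtoC (ln (INR n))).

Definition letter := (C * C)%type.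
Definition word := list letter.

Fixpoint Csum_to (f : nat -> C) (N : nat) : C :=
  match N with
  | O => 0
  | S k => Csum_to f k + f (S k)
  end.
(* Csum_to f N = f 1 + ... + f N *)

(* H_alpha(N) = sum_{N >= n_1 > ... > n_d >= 1} prod_i s_i^{n_i} / n_i^{r_i},
   H_[](N) = 1.  Unfolded recursively on the first letter:
   H_((r,s)::beta)(N) = sum_{n=1}^{N} s^n / n^r * H_beta(n-1). *)
Fixpoint H (alpha : word) (N : nat) : C :=
  match alpha with
  | [] => 1
  | (r, s) :: beta => Csum_to (fun n => Cpow s n / npow n r * H beta (Nat.pred n)) N
  end.

Definition Eterm := (C * C * C * word)%type.

Definition eval_Eterm (t : Eterm) (n : nat) : C :=
  match t with (c, z, q, alpha) => c * Cpow z n * npow n q * H alpha n end.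

Definition eval_E (F : list Eterm) (n : nat) : C :=
  fold_right (fun t acc => eval_Eterm t n + acc) 0 F.

Definition prod_pows (Fs : list (list Eterm * nat)) (n : nat) : C :=
  fold_right (fun Fe acc => Cpow (eval_E (fst Fe) n) (snd Fe) * acc) 1 Fs.

Definition lincomb_H (B : list (C * word)) (N : nat) : C :=
  fold_right (fun db acc => fst db * H (snd db) N + acc) 0 B.

(* Main.v *)
Require Import Defs.
From Stdlib Require Import Reals List Lia.
From Coquelicot Require Import Coquelicot.
Import ListNotations.
Open Scope C_scope.

Lemma Cexp_add : forall a b, Cexp (a + b) = Cexp a * Cexp b.
Proof.
  intros [a1 a2] [b1 b2]. unfold Cexp. simpl.
  rewrite exp_plus, cos_plus, sin_plus.
  apply injective_projections; simpl; ring.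
Qed.

Lemma Cexp_0 : Cexp 0 = 1.
Proof.
  unfold Cexp. simpl. rewrite exp_0, cos_0, sin_0.
  apply injective_projections; simpl; ring.
Qed.

Lemma npow_add : forall n a b, npow n (a + b) = npow n a * npow n b.
Proof.
  intros. unfold npow. rewrite <- Cexp_add. f_equal. ring.
Qed.

Lemma npow_0 : forall n, npow n 0 = 1.
Proof.
  intros. unfold npow. replace (0 * RtoC (ln (INR n))) with (RtoC 0).
  apply Cexp_0. ring.
Qed.

Lemma npow_neq0 : forall n a, npow n a <> 0.
Proof.
  intros n a E.
  assert (H1 : npow n (a + - a) = 0) by (rewrite npow_add, E; ring).
  replace (a + - a) with (RtoC 0) in H1 by ring.
  rewrite npow_0 in H1. apply C1_nz. exact H1.
Qed.

Lemma npow_opp : forall n a, npow n (- a) = / npow n a.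
Proof.
  intros. pose proof (npow_neq0 n a).
  assert (H1 : npow n (- a + a) = 1) by (replace (-a + a) with (RtoC 0) by ring; apply npow_0).
  rewrite npow_add in H1.
  field_simplify_eq; auto.
Qed.

Lemma Cpow_mul : forall a b n, Cpow (a * b) n = Cpow a n * Cpow b n.
Proof. intros a b n; induction n; simpl. ring. rewrite IHn; ring. Qed.

Lemma Cpow_1 : forall n, Cpow 1 n = 1.
Proof. induction n; simpl. reflexivity. rewrite IHn; ring. Qed.

Lemma Csum_ext : forall f g N, (forall n, f (S n) = g (S n)) -> Csum_to f N = Csum_to g N.
Proof. intros f g N E; induction N; simpl. reflexivity. rewrite IHN, E; reflexivity. Qed.

Lemma Csum_plus : forall f g N, Csum_to (fun n => f n + g n) N = Csum_to f N + Csum_to g N.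
Proof. intros f g N; induction N; simpl. ring. rewrite IHN; ring. Qed.

Lemma Csum_scal : forall c f N, Csum_to (fun n => c * f n) N = c * Csum_to f N.
Proof. intros c f N; induction N; simpl. ring. rewrite IHN; ring. Qed.

Lemma Csum_prod : forall f g N,
  Csum_to f N * Csum_to g N =
  Csum_to (fun k => f k * Csum_to g (pred k) + g k * Csum_to f (pred k) + f k * g k) N.
Proof. intros f g N; induction N; simpl. ring. rewrite <- IHN; ring. Qed.

Lemma lincomb_app : forall B1 B2 N, lincomb_H (B1 ++ B2) N = lincomb_H B1 N + lincomb_H B2 N.
Proof. induction B1; intros; simpl. ring. rewrite IHB1; ring. Qed.

Definition pre (r s : C) (B : list (C * word)) : list (C * word) :=
  map (fun db => (fst db, (r, s) :: snd db)) B.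

Lemma lincomb_pre : forall r s B n,
  Csum_to (fun k => Cpow s k / npow k r * lincomb_H B (pred k)) n = lincomb_H (pre r s B) n.
Proof.
  intros r s B; induction B as [|[d w] B IH]; intros n; simpl.
  - induction n; simpl. reflexivity. rewrite IHn; ring.
  - rewrite <- IH. simpl.
    rewrite <- Csum_scal, <- Csum_plus. apply Csum_ext. intros; ring.
Qed.

Lemma stuffle : forall m (a b : word), (length a + length b <= m)%nat ->
  exists B, forall n, H a n * H b n = lincomb_H B n.
Proof.
  induction m; intros a b Hl.
  - destruct a; [|simpl in Hl; lia]. exists [(RtoC 1, b)]. intros; simpl; ring.
  - destruct a as [|[r s] a'].
    { exists [(RtoC 1, b)]. intros; simpl; ring. }
    destruct b as [|[r' s'] b'].
    { exists [(RtoC 1, (r, s) :: a')]. intros; simpl; ring. }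
    simpl in Hl.
    destruct (IHm a' ((r', s') :: b')) as [B1 E1]. simpl; lia.
    destruct (IHm b' ((r, s) :: a')) as [B2 E2]. simpl; lia.
    destruct (IHm a' b') as [B3 E3]. lia.
    exists (pre r s B1 ++ pre r' s' B2 ++ pre (r + r') (s * s') B3).
    intros n. rewrite !lincomb_app, <- !lincomb_pre, <- !Csum_plus.
    change (H ((r, s) :: a') n) with
      (Csum_to (fun n => Cpow s n / npow n r * H a' (Nat.pred n)) n).
    change (H ((r', s') :: b') n) with
      (Csum_to (fun n => Cpow s' n / npow n r' * H b' (Nat.pred n)) n).
    rewrite Csum_prod. apply Csum_ext. intros k.
    change (Csum_to (fun n => Cpow s' n / npow n r' * H b' (Nat.pred n)) (pred (S k)))
      with (H ((r', s') :: b') (pred (S k))).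
    change (Csum_to (fun n => Cpow s n / npow n r * H a' (Nat.pred n)) (pred (S k)))
      with (H ((r, s) :: a') (pred (S k))).
    rewrite <- E1, <- E2, <- E3, Cpow_mul, npow_add.
    pose proof (npow_neq0 (S k) r). pose proof (npow_neq0 (S k) r').
    field. auto.
Qed.

Lemma eval_E_app : forall L1 L2 n, eval_E (L1 ++ L2) n = eval_E L1 n + eval_E L2 n.
Proof. induction L1; intros; simpl. ring. rewrite IHL1; ring. Qed.

Definition scaleB (c z q : C) (B : list (C * word)) : list Eterm :=
  map (fun db => (c * fst db, z, q, snd db)) B.

Lemma eval_scaleB : forall c z q B n,
  eval_E (scaleB c z q B) n = c * Cpow z n * npow n q * lincomb_H B n.
Proof.
  induction B as [|[d w] B IH]; intros; simpl. ring.
  rewrite IH. unfold eval_Eterm. simpl. ring.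
Qed.

Definition inE (f : nat -> C) := exists L, forall n, f n = eval_E L n.

Lemma term_term : forall t1 t2, inE (fun n => eval_Eterm t1 n * eval_Eterm t2 n).
Proof.
  intros [[[c z] q] a] [[[c' z'] q'] b].
  destruct (stuffle _ a b (le_n _)) as [B E].
  exists (scaleB (c * c') (z * z') (q + q') B). intros n.
  rewrite eval_scaleB, <- E, Cpow_mul, npow_add. unfold eval_Eterm. ring.
Qed.

Lemma term_list : forall t L, inE (fun n => eval_Eterm t n * eval_E L n).
Proof.
  intros t L; induction L as [|t' L IH].
  - exists []. intros; simpl; ring.
  - destruct IH as [L1 E1]. destruct (term_term t t') as [L2 E2].
    exists (L2 ++ L1). intros n. rewrite eval_E_app, <- E1, <- E2. simpl. ring.
Qed.

Lemma list_list : forall L1 L2, inE (fun n => eval_E L1 n * eval_E L2 n).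
Proof.
  intros L1 L2; induction L1 as [|t L IH].
  - exists []. intros; simpl; ring.
  - destruct IH as [M1 E1]. destruct (term_list t L2) as [M2 E2].
    exists (M2 ++ M1). intros n. rewrite eval_E_app, <- E1, <- E2. simpl. ring.
Qed.

Lemma inE_mul : forall f g, inE f -> inE g -> inE (fun n => f n * g n).
Proof.
  intros f g [L1 E1] [L2 E2]. destruct (list_list L1 L2) as [L E].
  exists L. intros n. rewrite E1, E2, E. reflexivity.
Qed.

Lemma inE_1 : inE (fun _ => 1).
Proof.
  exists [(RtoC 1, RtoC 1, RtoC 0, [])]. intros n. simpl. unfold eval_Eterm.
  rewrite Cpow_1, npow_0. simpl. ring.
Qed.

Lemma inE_pow : forall L e, inE (fun n => Cpow (eval_E L n) e).
Proof.
  intros L e; induction e.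
  - apply inE_1.
  - simpl. apply (inE_mul (eval_E L)). exists L; auto. exact IHe.
Qed.

Lemma inE_prod : forall Fs, inE (prod_pows Fs).
Proof.
  induction Fs as [|[L e] Fs IH].
  - apply inE_1.
  - unfold prod_pows; simpl. apply (inE_mul (fun n => Cpow (eval_E L n) e)).
    apply inE_pow. exact IH.
Qed.

Definition termB (t : Eterm) : list (C * word) :=
  match t with (c, z, q, a) =>
    (c, (- q, z) :: a) ::
    match a with
    | [] => []
    | (r, s) :: b => [(c, (r - q, z * s) :: b)]
    end
  end.

Lemma sum_term : forall t N, Csum_to (eval_Eterm t) N = lincomb_H (termB t) N.
Proof.
  intros [[[c z] q] a] N. unfold termB.
  destruct a as [|[r s] b].
  - simpl. rewrite <- Csum_scal, Cplus_0_r. apply Csum_ext. intros n.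
    unfold eval_Eterm. rewrite npow_opp. simpl.
    pose proof (npow_neq0 (S n) q). field. auto.
  - simpl lincomb_H. rewrite Cplus_0_r, <- !Csum_scal, <- Csum_plus.
    apply Csum_ext. intros n. unfold eval_Eterm.
    change (H ((r, s) :: b) (S n)) with
      (H ((r, s) :: b) n + Cpow s (S n) / npow (S n) r * H b n).
    change (Csum_to (fun n0 : nat => Cpow s n0 / npow n0 r * H b (Nat.pred n0)) (Nat.pred (S n)))
      with (H ((r, s) :: b) n).
    simpl Nat.pred.
    replace (r - q) with (r + - q) by ring.
    rewrite Cpow_mul, npow_add, !npow_opp.
    pose proof (npow_neq0 (S n) q). pose proof (npow_neq0 (S n) r).
    field. auto.
Qed.

Lemma sum_E : forall L N, Csum_to (eval_E L) N = lincomb_H (flat_map termB L) N.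
Proof.
  induction L as [|t L IH]; intros N; simpl.
  - induction N; simpl. reflexivity. rewrite IHN; ring.
  - rewrite lincomb_app, <- IH, <- sum_term, <- Csum_plus. reflexivity.
Qed.

Theorem theorem3p1 :
  forall Fs : list (list Eterm * nat),
  exists B : list (C * word),
    forall N : nat, (1 <= N)%nat ->
      Csum_to (prod_pows Fs) N = lincomb_H B N.
Proof.
  intros Fs. destruct (inE_prod Fs) as [L E].
  exists (flat_map termB L). intros N _.
  rewrite <- sum_E. apply Csum_ext. intros; apply E.
Qed.
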